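(* Let $(\Lambda,\mathcal{G}_\Lambda)$ be a labeled graph all of whose vertex groups are directly-indecomposable cyclic groups, and let $u$ be a CP element of $W(\Lambda)$. Then the centralizer of $u$ in $W(\Lambda)$ equals $W(\mathrm{st}(u))$, i.e. $C_{W(\Lambda)}(u)=W(\mathrm{st}(u))$.
   Context: A labeled graph $(\Lambda,\mathcal{G}_\Lambda)$ consists of a nonempty finite simplicial graph $\Lambda$ with vertex set $V_\Lambda$ and a family $\mathcal{G}_\Lambda=\{G_v\}_{v\in V_\Lambda}$ of nontrivial groups. Its graph product $W(\Lambda)=W(\Lambda,\mathcal{G}_\Lambda)$ is the quotient of the free product $\ast_{v\in V_\Lambda}G_v$ by the relations $gh=hg$ for all $g\in G_v$, $h\in G_{v'}$ with $v,v'$ adjacent in $\Lambda$. For a full subgraph $\Theta$ of $\Lambda$, $W(\Theta)$ denotes the subgroup of $W(\Lambda)$ generated by the images of the $G_v$, $v\in V_\Theta$. A cyclic group is primary if it has prime-power order, and directly-indecomposable if it is infinite or primary. When all vertex groups are cyclic, a generator of each $G_v$ is fixed and also denoted $v$; words are words in the alphabet $V_\Lambda^{\pm1}$, and a word is reduced if no shorter word represents the same element of $W(\Lambda)$. For $g\in W(\Lambda)$, $\mathrm{supp}(g)$ is the set of vertices $v$ such that $v$ or $v^{-1}$ appears in some reduced word representing $g$. An element $u\in W(\Lambda)$ is a CP element if $u\in W(\Delta)$ for some complete subgraph $\Delta$ of $\Lambda$. For such $u$, $\mathrm{st}(u)$ denotes the full subgraph of $\Lambda$ spanned by $\mathrm{supp}(u)$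 together with all vertices adjacent to every vertex of $\mathrm{supp}(u)$. *)

(* Defs.v *)
From mathcomp Require Import all_boot.
Set Implicit Arguments. Unset Strict Implicit. Unset Printing Implicit Defensive.

(* A letter (v, false) is the generator v, (v, true) is v^{-1}.
   The cyclic vertex group G_v has order [ord v], with [ord v = 0] meaning
   infinite cyclic.  [e] is the adjacency relation of the simplicial graph. *)
Definition letter (V : finType) := (V * bool)%type.

(* Defining relations of W(Lambda) as a monoid presentation on V^{+-1}. *)
Inductive gp_rel (V : finType) (e : rel V) (ord : V -> nat) :
    seq (letter V) -> seq (letter V) -> Prop :=
| gp_rel_inv : forall v b, gp_rel e ord [:: (v, b); (v, ~~ b)] [::]
| gp_rel_ord : forall v, 0 < ord v -> gp_rel e ord (nseq (ord v) (v, false)) [::]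
| gp_rel_comm : forall v w b c, e v w ->
    gp_rel e ord [:: (v, b); (w, c)] [:: (w, c); (v, b)].

Inductive gp_eq (V : finType) (e : rel V) (ord : V -> nat) :
    seq (letter V) -> seq (letter V) -> Prop :=
| gp_eq_refl : forall w, gp_eq e ord w w
| gp_eq_sym : forall w1 w2, gp_eq e ord w1 w2 -> gp_eq e ord w2 w1
| gp_eq_trans : forall w1 w2 w3,
    gp_eq e ord w1 w2 -> gp_eq e ord w2 w3 -> gp_eq e ord w1 w3
| gp_eq_ctx : forall s t x y, gp_rel e ord x y ->
    gp_eq e ord (s ++ x ++ t) (s ++ y ++ t).

Definition reduced (V : finType) (e : rel V) (ord : V -> nat) (w : seq (letter V)) :=
  forall w', gp_eq e ord w w' -> size w <= size w'.

Definition in_supp (V : finType) (e : rel V) (ord : V -> nat) (g : seq (letter V)) (v : V) :=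
  exists w, [/\ gp_eq e ord g w, reduced e ord w & v \in map fst w].

(* The element represented by g lies in W(Theta), Theta the full subgraph on P. *)
Definition in_W (V : finType) (e : rel V) (ord : V -> nat) (P : V -> Prop)
    (g : seq (letter V)) :=
  exists w, gp_eq e ord g w /\ forall x, x \in w -> P x.1.

Definition complete_sub (V : finType) (e : rel V) (P : V -> Prop) :=
  forall v w, P v -> P w -> v <> w -> e v w.

Definition CP_elt (V : finType) (e : rel V) (ord : V -> nat) (u : seq (letter V)) :=
  exists P : V -> Prop, complete_sub e P /\ in_W e ord P u.

Definition in_st (V : finType) (e : rel V) (ord : V -> nat) (u : seq (letter V)) (v : V) :=
  in_supp e ord u v \/ forall x, in_supp e ord u x -> e v x.

(* Directly-indecomposable cyclic: infinite, or of prime-power order p^k, k >= 1. *)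
Definition dir_indec_order (n : nat) :=
  n = 0 \/ exists p k, [/\ prime p, 0 < k & n = p ^ k].

(* Main.v *)
Require Import Defs.
From Stdlib Require Import ZArith Lia Classical.
From mathcomp Require Import all_boot.
Set Implicit Arguments. Unset Strict Implicit. Unset Printing Implicit Defensive.

Section GP.
Variables (V : finType) (e : rel V) (ord : V -> nat).
Hypothesis Hsym : symmetric e.
Hypothesis Hirr : irreflexive e.
Hypothesis Hord1 : forall v, ord v <> 1.

Local Notation eqw := (gp_eq e ord).
Local Notation word := (seq (letter V)).

Lemma eqw_ctx (s t x y : word) : eqw x y -> eqw (s ++ x ++ t) (s ++ y ++ t).
Proof.
elim=> [w|w1 w2 _ IH|w1 w2 w3 _ IH1 _ IH2|s' t' x' y' R].
- exact: gp_eq_refl.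
- exact: gp_eq_sym.
- exact: gp_eq_trans IH2.
- have := gp_eq_ctx (s ++ s') (t' ++ t) R.
  by rewrite -!catA.
Qed.

Lemma eqw_app (a a' b b' : word) : eqw a a' -> eqw b b' -> eqw (a ++ b) (a' ++ b').
Proof.
move=> Ha Hb; apply: (@gp_eq_trans _ _ _ _ (a' ++ b)).
  by have := eqw_ctx [::] b Ha; rewrite /=.
by have := eqw_ctx a' [::] Hb; rewrite !cats0.
Qed.

Lemma eqw_trans (a b c : word) : eqw a b -> eqw b c -> eqw a c.
Proof. exact: gp_eq_trans. Qed.
Lemma eqw_sym (a b : word) : eqw a b -> eqw b a.
Proof. exact: gp_eq_sym. Qed.
Lemma eqw_refl (a : word) : eqw a a.
Proof. exact: gp_eq_refl. Qed.
Lemma eqw_rel (x y : word) : gp_rel e ord x y -> eqw x y.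
Proof. by move=> R; have := gp_eq_ctx [::] [::] R; rewrite /= !cats0. Qed.

Lemma eqw_cons l (a b : word) : eqw a b -> eqw (l :: a) (l :: b).
Proof. by move=> H; apply: (eqw_app (eqw_refl [:: l]) H). Qed.

Lemma swap2 (l m : letter V) : l.1 = m.1 \/ e l.1 m.1 -> eqw [:: l; m] [:: m; l].
Proof.
case: l m => [v b] [w c] /= [<-|H].
- case: b; case: c => /=; try exact: eqw_refl.
  + apply: (eqw_trans (eqw_rel (gp_rel_inv e ord v true))).
    apply: eqw_sym; exact: (eqw_rel (gp_rel_inv e ord v false)).
  + apply: (eqw_trans (eqw_rel (gp_rel_inv e ord v false))).
    apply: eqw_sym; exact: (eqw_rel (gp_rel_inv e ord v true)).
- exact: eqw_rel (gp_rel_comm ord b c H).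
Qed.

Lemma wcomm1 (l : letter V) (b : word) :
  (forall m, m \in b -> l.1 = m.1 \/ e l.1 m.1) -> eqw (l :: b) (b ++ [:: l]).
Proof.
elim: b => [|m b IH] H /=; first exact: eqw_refl.
apply: (eqw_trans (_ : eqw _ (m :: l :: b))).
  have := eqw_app (swap2 (H m (mem_head _ _))) (eqw_refl b); exact.
apply: eqw_cons; apply: IH => m' Hm'; apply: H; by rewrite in_cons Hm' orbT.
Qed.

Lemma wcomm (a b : word) :
  (forall l m, l \in a -> m \in b -> l.1 = m.1 \/ e l.1 m.1) -> eqw (a ++ b) (b ++ a).
Proof.
elim: a => [|l a IH] H /=; first by rewrite cats0; exact: eqw_refl.
apply: (eqw_trans (eqw_cons l (IH _))).
  by move=> l' m Hl Hm; apply: H => //; rewrite in_cons Hl orbT.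
have := eqw_app (wcomm1 (fun m Hm => H l m (mem_head _ _) Hm)) (eqw_refl a).
by rewrite -catA.
Qed.

Definition winv (a : word) : word := rev (map (fun l => (l.1, ~~ l.2)) a).

Lemma winv_l (a : word) : eqw (winv a ++ a) [::].
Proof.
elim: a => [|[v b] a IH]; first exact: eqw_refl.
rewrite /winv /= rev_cons -cats1 -/(winv a) -catA /=.
apply: eqw_trans IH.
have := eqw_ctx (winv a) a (eqw_rel (gp_rel_inv e ord v (~~ b))).
by rewrite negbK /=.
Qed.

Lemma winv_r (a : word) : eqw (a ++ winv a) [::].
Proof.
elim: a => [|[v b] a IH]; first exact: eqw_refl.
rewrite /winv /= rev_cons -cats1 -/(winv a) /=.
apply: (eqw_trans _ (eqw_rel (gp_rel_inv e ord v b))).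
have := eqw_ctx [:: (v, b)] [:: (v, ~~ b)] IH.
by rewrite /= -catA.
Qed.

Lemma cancel_l (a x y : word) : eqw (a ++ x) (a ++ y) -> eqw x y.
Proof.
move=> H; have := eqw_app (eqw_refl (winv a)) H; rewrite !catA => H'.
have H1 := eqw_app (winv_l a) (eqw_refl x).
have H2 := eqw_app (winv_l a) (eqw_refl y).
exact: eqw_trans (eqw_sym H1) (eqw_trans H' H2).
Qed.

Lemma cancel_r (a x y : word) : eqw (x ++ a) (y ++ a) -> eqw x y.
Proof.
move=> H; have := eqw_app H (eqw_refl (winv a)); rewrite -!catA => H'.
have H1 := eqw_app (eqw_refl x) (winv_r a); rewrite cats0 in H1.
have H2 := eqw_app (eqw_refl y) (winv_r a); rewrite cats0 in H2.
exact: eqw_trans (eqw_sym H1) (eqw_trans H' H2).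
Qed.


Definition pw (v : V) (k : Z) : word :=
  if (0 <=? k)%Z then nseq (Z.to_nat k) (v, false) else nseq (Z.to_nat (- k)) (v, true).

Lemma pw0 v : pw v 0 = [::]. Proof. by []. Qed.

Lemma pw_succ v a : eqw ((v, false) :: pw v a) (pw v (a + 1)).
Proof.
rewrite /pw; case: (Z.leb_spec 0 a) => Ha.
- have -> : (0 <=? a + 1)%Z = true by apply/Z.leb_le; lia.
  have -> : Z.to_nat (a + 1) = (Z.to_nat a).+1 by lia.
  exact: eqw_refl.
- have -> : Z.to_nat (- a) = (Z.to_nat (- (a + 1))).+1 by lia.
  have -> : (if (0 <=? a + 1)%Z then nseq (Z.to_nat (a + 1)) (v, false)
             else nseq (Z.to_nat (- (a + 1))) (v, true)) = nseq (Z.to_nat (- (a + 1))) (v, true).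
    case: (Z.leb_spec 0 (a + 1)) => H //.
    have E1 : Z.to_nat (a + 1) = 0 by lia.
    have E2 : Z.to_nat (- (a + 1)) = 0 by lia.
    by rewrite E1 E2.
  have := eqw_ctx [::] (nseq (Z.to_nat (- (a + 1))) (v, true)) (eqw_rel (gp_rel_inv e ord v false)).
  by [].
Qed.

Lemma pw_pred v a : eqw ((v, true) :: pw v a) (pw v (a - 1)).
Proof.
rewrite /pw; case: (Z.leb_spec 0 (a - 1)) => Ha.
- have -> : (0 <=? a)%Z = true by apply/Z.leb_le; lia.
  have -> : Z.to_nat a = (Z.to_nat (a - 1)).+1 by lia.
  have := eqw_ctx [::] (nseq (Z.to_nat (a - 1)) (v, false)) (eqw_rel (gp_rel_inv e ord v true)).
  by [].
- have -> : Z.to_nat (- (a - 1)) = (Z.to_nat (- a)).+1 by lia.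
  case: (Z.leb_spec 0 a) => H.
  + have -> : a = 0%Z by lia. exact: eqw_refl.
  + exact: eqw_refl.
Qed.

Lemma pw_add v a b : eqw (pw v a ++ pw v b) (pw v (a + b)).
Proof.
elim/Z.peano_ind: a.
- exact: eqw_refl.
- move=> x IH; rewrite -Z.add_1_r.
  apply: (eqw_trans (eqw_app (eqw_sym (pw_succ v x)) (eqw_refl _))) => /=.
  apply: (eqw_trans (eqw_cons _ IH)).
  have -> : (x + 1 + b = (x + b) + 1)%Z by lia.
  exact: pw_succ.
- move=> x IH; rewrite -Z.sub_1_r.
  apply: (eqw_trans (eqw_app (eqw_sym (pw_pred v x)) (eqw_refl _))) => /=.
  apply: (eqw_trans (eqw_cons _ IH)).
  have -> : (x - 1 + b = (x + b) - 1)%Z by lia.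
  exact: pw_pred.
Qed.

Definition nrm (n : nat) (x : Z) : Z := if n is 0 then x else (x mod Z.of_nat n)%Z.

Lemma pw_ord v : 0 < ord v -> eqw (pw v (Z.of_nat (ord v))) [::].
Proof.
move=> H; rewrite /pw.
have -> : (0 <=? Z.of_nat (ord v))%Z = true by apply/Z.leb_le; lia.
rewrite Nat2Z.id; exact: eqw_rel (gp_rel_ord e H).
Qed.

Lemma pw_mult v q : 0 < ord v -> eqw (pw v (Z.of_nat (ord v) * q)) [::].
Proof.
move=> H; elim/Z.peano_ind: q.
- rewrite Z.mul_0_r; exact: eqw_refl.
- move=> x IH; have -> : (Z.of_nat (ord v) * Z.succ x = Z.of_nat (ord v) + Z.of_nat (ord v) * x)%Z by lia.
  apply: (eqw_trans (eqw_sym (pw_add _ _ _))).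
  have := eqw_app (pw_ord H) IH; exact.
- move=> x IH; apply: (eqw_trans _ IH).
  have E : (Z.of_nat (ord v) * x = Z.of_nat (ord v) * Z.pred x + Z.of_nat (ord v))%Z by lia.
  rewrite E; apply: (eqw_trans _ (pw_add _ _ _)).
  have := eqw_app (eqw_refl (pw v (Z.of_nat (ord v) * Z.pred x))) (eqw_sym (pw_ord H)).
  by rewrite cats0.
Qed.

Lemma pw_nrm v k : eqw (pw v k) (pw v (nrm (ord v) k)).
Proof.
rewrite /nrm; case E: (ord v) => [|n]; first exact: eqw_refl.
have H : 0 < ord v by rewrite E.
have n0 : Z.of_nat n.+1 <> 0%Z by lia.
rewrite {1}(Z.div_mod k (Z.of_nat n.+1) n0).
apply: (eqw_trans (eqw_sym (pw_add _ _ _))).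
have := eqw_app (pw_mult (k / Z.of_nat n.+1) H) (eqw_refl (pw v (k mod Z.of_nat n.+1))).
by rewrite E.
Qed.

Definition lx (b : bool) : Z := if b then (-1)%Z else 1%Z.
Lemma pw_lx v b : pw v (lx b) = [:: (v, b)].
Proof. by case: b. Qed.

Lemma mem_pw v k l : l \in pw v k -> l.1 = v.
Proof. by rewrite /pw; case: ifP => _ /nseqP [-> _]. Qed.


(* syllables *)
Definition syl := (V * Z)%type.

Fixpoint reach (v : V) (s : seq V) : bool :=
  if s is x :: s' then (x == v) || (e v x && reach v s') else false.

Definition upd (v : V) (x : Z) (q : seq syl) : seq syl :=
  if (nrm (ord v) x =? 0)%Z then q else (v, nrm (ord v) x) :: q.

Fixpoint merge (v : V) (d : Z) (r : seq syl) : seq syl :=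
  if r is c :: r' then (if c.1 == v then upd v (c.2 + d) r' else c :: merge v d r') else [::].

Definition act (v : V) (d : Z) (r : seq syl) : seq syl :=
  if reach v (map fst r) then merge v d r else upd v d r.

Definition vsyl (c : syl) : bool := ~~ (c.2 =? 0)%Z && (nrm (ord c.1) c.2 =? c.2)%Z.

Fixpoint redb (r : seq syl) : bool :=
  if r is c :: r' then [&& vsyl c, ~~ reach c.1 (map fst r') & redb r'] else true.

Definition flat (r : seq syl) : word := flatten (map (fun c => pw c.1 c.2) r).

Lemma flat_cat (r1 r2 : seq syl) : flat (r1 ++ r2) = flat r1 ++ flat r2.
Proof. by rewrite /flat map_cat flatten_cat. Qed.
Lemma flat_rcons (r : seq syl) c : flat (r ++ [:: c]) = flat r ++ pw c.1 c.2.
Proof. by rewrite /flat map_cat flatten_cat /= cats0. Qed.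
Lemma flat_cons (c : syl) r : flat (c :: r) = pw c.1 c.2 ++ flat r.
Proof. by []. Qed.

Lemma adj_neq v x : e v x -> (x == v) = false.
Proof. by apply: contraTF => /eqP ->; rewrite Hirr. Qed.

Lemma reach_cat v s t : reach v (s ++ t) = reach v s || (all (e v) s && reach v t).
Proof.
elim: s => [|x s IH] //=; rewrite IH.
by case: (x == v); case: (e v x); case: (reach v s).
Qed.

Lemma reach_mem v s : reach v s -> v \in s.
Proof.
elim: s => [|x s IH] //= /orP [/eqP ->|/andP [_ H]]; first exact: mem_head.
by rewrite in_cons IH ?orbT.
Qed.

Lemma all_adj_notin v s : all (e v) s -> v \notin s.
Proof. by apply: contraTN => H; apply/allPn; exists v => //; rewrite Hirr. Qed.

Lemma reach_adj v s t : all (e v) s -> reach v (s ++ t) = reach v t.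
Proof.
move=> H; rewrite reach_cat H /=.
by case R: (reach v s) => //; have := all_adj_notin H; rewrite (reach_mem R).
Qed.

Lemma reach_dec v (r : seq syl) : reach v (map fst r) ->
  exists p k q, r = p ++ (v, k) :: q /\ all (e v) (map fst p).
Proof.
elim: r => [|[x k] r IH] //= /orP [/eqP ->|/andP [Hx /IH [p [k' [q [-> Hp]]]]]].
- by exists [::], k, r.
- by exists ((x, k) :: p), k', q; rewrite /= Hx.
Qed.

Lemma reach_swap v x y s : e x y -> reach v (x :: y :: s) = reach v (y :: x :: s).
Proof.
move=> Hxy /=; have Nyx := adj_neq Hxy.
case Ex: (x == v); case Ey: (y == v) => /=.
- by move: Nyx; rewrite (eqP Ex) (eqP Ey) eqxx.
- by rewrite -(eqP Ex) Hxy.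
- by rewrite -(eqP Ey) Hsym Hxy.
- by case: (e v x); case: (e v y).
Qed.

Lemma merge_cat v d (s t : seq syl) : merge v d (s ++ t) =
  if v \in map fst s then merge v d s ++ t else s ++ merge v d t.
Proof.
elim: s => [|c s IH] //=; rewrite in_cons eq_sym.
case: (v == c.1) => /=; first by rewrite /upd; case: ifP.
rewrite IH; by case: (v \in map fst s).
Qed.

Lemma merge_dec v d (p q : seq syl) k : all (e v) (map fst p) ->
  merge v d (p ++ (v, k) :: q) = p ++ upd v (k + d) q.
Proof.
move=> H; rewrite merge_cat (negPf (all_adj_notin H)) /= eqxx //.
Qed.

Lemma redb_split (p q : seq syl) c : redb (p ++ c :: q) ->
  [&& vsyl c, ~~ reach c.1 (map fst q) & redb q].
Proof. by elim: p => [|x p IH] //= /and3P [_ _ /IH]. Qed.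

Lemma redb_suffix (p q : seq syl) : redb (p ++ q) -> redb q.
Proof. by elim: p => [|x p IH] //= /and3P [_ _ /IH]. Qed.

Lemma redb_prefix (p q : seq syl) : redb (p ++ q) -> redb p.
Proof.
elim: p => [|c p IH] //= /and3P [Hc Hr /IH ->]; rewrite Hc andbT.
by move: Hr; rewrite map_cat reach_cat negb_or => /andP [].
Qed.

Lemma redb_congr (p t t' : seq syl) : redb (p ++ t) -> redb t' ->
  all (fun c => reach c.1 (map fst t) == reach c.1 (map fst t')) p -> redb (p ++ t').
Proof.
elim: p => [|c p IH] //= /and3P [Hc Hr Hp] Ht' /andP [/eqP E Hall].
rewrite Hc IH //= andbT; move: Hr; by rewrite !map_cat !reach_cat E.
Qed.

Lemma redb_catP (p t : seq syl) : redb t ->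
  (forall p1 c p2, p = p1 ++ c :: p2 -> vsyl c && ~~ reach c.1 (map fst (p2 ++ t))) ->
  redb (p ++ t).
Proof.
elim: p => [|c p IH] //= Ht H.
have /andP [-> ->] := H [::] c p erefl.
rewrite IH // => p1 c' p2 E; apply: (H (c :: p1)); by rewrite E.
Qed.


Lemma allT (T : Type) (P : pred T) (s : seq T) : (forall x, P x) -> all P s.
Proof. by move=> H; elim: s => //= x s ->; rewrite H. Qed.

(* shuffle equivalence *)
Inductive step : seq syl -> seq syl -> Prop :=
| stepI (p q : seq syl) (a b : syl) : e a.1 b.1 -> step (p ++ a :: b :: q) (p ++ b :: a :: q).

Inductive sim : seq syl -> seq syl -> Prop :=
| sim0 r : sim r r
| simS r1 r2 r3 : step r1 r2 -> sim r2 r3 -> sim r1 r3.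

Lemma sim1 r1 r2 : step r1 r2 -> sim r1 r2.
Proof. by move=> H; apply: simS H (sim0 _). Qed.

Lemma sim_trans r1 r2 r3 : sim r1 r2 -> sim r2 r3 -> sim r1 r3.
Proof. by elim=> // a b c H _ IH /IH; apply: simS. Qed.

Lemma step_sym r1 r2 : step r1 r2 -> step r2 r1.
Proof. by case=> p q a b H; apply: stepI; rewrite Hsym. Qed.

Lemma sim_sym r1 r2 : sim r1 r2 -> sim r2 r1.
Proof.
elim=> [r|a b c H _ IH]; first exact: sim0.
exact: sim_trans IH (sim1 (step_sym H)).
Qed.

Lemma step_pre p r1 r2 : step r1 r2 -> step (p ++ r1) (p ++ r2).
Proof. by case=> p' q a b H; rewrite !catA; apply: stepI. Qed.

Lemma sim_pre p r1 r2 : sim r1 r2 -> sim (p ++ r1) (p ++ r2).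
Proof. elim=> [r|a b c H _ IH]; [exact: sim0|exact: simS (step_pre p H) IH]. Qed.

Lemma step_redb r1 r2 : step r1 r2 -> redb r1 -> redb r2.
Proof.
case=> p q a b Hab H.
have Hb : redb (b :: a :: q).
  move: (redb_suffix H) => /= /and3P [Ha Hra /and3P [Hb Hrb Hq]].
  rewrite Ha Hb Hq /=.
  rewrite (adj_neq Hab) Hab /= in Hra.
  have Hba : e b.1 a.1 by rewrite Hsym.
  by rewrite (adj_neq Hba) Hba /= Hrb Hra.
apply: (redb_congr H Hb); apply: allT => c.
by have := reach_swap c.1 (map fst q) Hab => /= ->.
Qed.

Lemma sim_redb r1 r2 : sim r1 r2 -> redb r1 -> redb r2.
Proof. by elim=> // a b c H _ IH /(step_redb H). Qed.

Lemma reach_upd_adj v w x (s : seq syl) : e v w ->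
  reach v (map fst (upd w x s)) = reach v (map fst s).
Proof. by move=> H; rewrite /upd; case: ifP => //= _; rewrite (adj_neq H) H. Qed.

Lemma reach_merge_adj v w d (s : seq syl) : e v w ->
  reach v (map fst (merge w d s)) = reach v (map fst s).
Proof.
move=> H; elim: s => [|c s IH] //=.
case: (eqVneq c.1 w) => [E|_] /=; last by rewrite IH.
by rewrite reach_upd_adj // E (adj_neq H) H.
Qed.

Lemma step_act v d r1 r2 : step r1 r2 -> sim (act v d r1) (act v d r2).
Proof.
case=> p q a b Hab.
have Er : reach v (map fst (p ++ a :: b :: q)) = reach v (map fst (p ++ b :: a :: q)).
  by rewrite !map_cat !reach_cat; congr (_ || (_ && _)); exact: reach_swap.
rewrite /act -Er; case: ifP => _.
- rewrite !merge_cat; case: ifP => _; first exact: sim1 (stepI _ _ Hab).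
  apply: sim_pre => /=.
  case: (eqVneq a.1 v) => [Ea|Na].
  + rewrite (_ : (b.1 == v) = false) /=; last by rewrite -Ea (adj_neq Hab).
    rewrite /upd; case: ifP => _; first exact: sim0.
    have H' : e v b.1 by rewrite -Ea.
    exact: sim1 (@stepI [::] q (v, _) b H').
  + case: (eqVneq b.1 v) => [Eb|Nb].
    * rewrite /upd; case: ifP => _; first exact: sim0.
      have H' : e a.1 v by rewrite -Eb.
      exact: sim1 (@stepI [::] q a (v, _) H').
    * exact: sim1 (stepI [::] _ Hab).
- rewrite /upd; case: ifP => _; first exact: sim1 (stepI _ _ Hab).
  exact: sim1 (stepI ((v, nrm (ord v) d) :: p) _ Hab).
Qed.

Lemma act_sim v d r1 r2 : sim r1 r2 -> sim (act v d r1) (act v d r2).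
Proof. elim=> [r|a b c H _ IH]; [exact: sim0|exact: sim_trans (step_act v d H) IH]. Qed.


Lemma nrm_nrm n x : nrm n (nrm n x) = nrm n x.
Proof. case: n => [|n] //=; apply: Z.mod_mod; lia. Qed.

Lemma nrm0 n : nrm n 0 = 0%Z.
Proof. case: n => [|n] //=; apply: Z.mod_0_l; lia. Qed.

Lemma nrm_addl n x y : nrm n (nrm n x + y) = nrm n (x + y).
Proof. case: n => [|n] //=; exact: Zplus_mod_idemp_l. Qed.

Lemma nrm_eq0_add n x y : nrm n x = 0%Z -> nrm n (x + y) = nrm n y.
Proof. by move=> H; rewrite -nrm_addl H. Qed.

Lemma nrm_ord v : nrm (ord v) (Z.of_nat (ord v)) = 0%Z.
Proof. case: (ord v) => [|n] //=; apply: Z.mod_same; lia. Qed.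

Lemma nrm1 v : nrm (ord v) 1 = 1%Z.
Proof.
have := @Hord1 v; case: (ord v) => [|n] //= H; apply: Z.mod_small.
by case: n H => [|n] // _; lia.
Qed.

Lemma upd_nrm v x y q : nrm (ord v) x = nrm (ord v) y -> upd v x q = upd v y q.
Proof. by rewrite /upd => ->. Qed.

Lemma vsyl_nrm v x : ~~ (nrm (ord v) x =? 0)%Z -> vsyl (v, nrm (ord v) x).
Proof. by move=> H; rewrite /vsyl /= H nrm_nrm Z.eqb_refl. Qed.

Lemma vsyl_k v k : vsyl (v, k) -> nrm (ord v) k = k /\ k <> 0%Z.
Proof. by case/andP => /= /negP H /Z.eqb_eq ->; split=> // E; apply: H; apply/Z.eqb_eq. Qed.

Lemma reach_cons_adj c v (s : seq V) : e c v -> reach c (v :: s) = reach c s.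
Proof. by move=> H /=; rewrite (adj_neq H) H. Qed.

Lemma act_redb v d r : redb r -> redb (act v d r).
Proof.
move=> Hr; rewrite /act; case: ifP => R.
- have [p [k [q [Er Hp]]]] := reach_dec R; subst r.
  rewrite merge_dec //.
  have /and3P [Hk Hq Hqr] := redb_split Hr.
  apply: (redb_congr Hr).
  + rewrite /upd; case: ifP => // N /=; rewrite vsyl_nrm ?N //=; by rewrite Hq Hqr.
  + elim: p Hp {Hr R} => //= c p IH /andP [Hc Hp]; rewrite IH // andbT.
    have Hc' : e c.1 v by rewrite Hsym.
    rewrite (adj_neq Hc') Hc' /=; rewrite /upd; case: ifP => //= _.
    by rewrite (adj_neq Hc') Hc'.
- rewrite /upd; case: ifP => // N /=; rewrite vsyl_nrm ?N //=; by rewrite R Hr.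
Qed.

Lemma sim_front (p q : seq syl) c : all (e c.1) (map fst p) -> sim (p ++ c :: q) (c :: p ++ q).
Proof.
elim: p => [|x p IH] /=; first by move=> _; exact: sim0.
case/andP => Hx Hp.
apply: sim_trans (sim_pre [:: x] (IH Hp)) _.
apply: sim1; have := @stepI [::] (p ++ q) x c; rewrite /=; apply; by rewrite Hsym.
Qed.

Lemma sim_back (p q : seq syl) c : all (e c.1) (map fst q) -> sim (p ++ c :: q) (p ++ q ++ [:: c]).
Proof.
elim: q p => [|x q IH] p /=; first by move=> _; exact: sim0.
case/andP => Hx Hq.
apply: simS (stepI p q Hx) _.
have := IH (p ++ [:: x]) Hq; by rewrite -!catA.
Qed.

Lemma act_comp v a b r : redb r -> sim (act v a (act v b r)) (act v (b + a) r).
Proof.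
move=> Hr; case R: (reach v (map fst r)).
- have [p [k [q [Er Hp]]]] := reach_dec R; subst r.
  have /and3P [Hk Hq Hqr] := redb_split Hr.
  have [Nk Kk] := vsyl_k Hk.
  have E1 : act v b (p ++ (v, k) :: q) = p ++ upd v (k + b) q by rewrite /act R merge_dec.
  have E2 : act v (b + a) (p ++ (v, k) :: q) = p ++ upd v (k + (b + a)) q by rewrite /act R merge_dec.
  rewrite E1 E2 /act map_cat reach_adj //.
  case N: (nrm (ord v) (k + b) =? 0)%Z.
  + have -> : upd v (k + b) q = q by rewrite /upd N.
    rewrite (negPf Hq) (upd_nrm _ (y := a)); last first.
      by rewrite Z.add_assoc nrm_eq0_add //; apply/Z.eqb_eq.
    rewrite /upd; case: ifP => _; first exact: sim0.
    by apply: sim_sym; apply: sim_front.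
  + have -> : upd v (k + b) q = (v, nrm (ord v) (k + b)) :: q by rewrite /upd N.
    rewrite /= eqxx /= merge_dec // (upd_nrm _ (y := k + (b + a))); first exact: sim0.
    by rewrite nrm_addl Z.add_assoc.
- have E1 : act v b r = upd v b r by rewrite /act R.
  have E2 : act v (b + a) r = upd v (b + a) r by rewrite /act R.
  rewrite E1 E2; case N: (nrm (ord v) b =? 0)%Z.
  + have -> : upd v b r = r by rewrite /upd N.
    rewrite /act R (upd_nrm _ (y := b + a)); first exact: sim0.
    by rewrite nrm_eq0_add //; apply/Z.eqb_eq.
  + have -> : upd v b r = (v, nrm (ord v) b) :: r by rewrite /upd N.
    rewrite /act /= eqxx /= (upd_nrm _ (y := b + a)); first exact: sim0.
    by rewrite nrm_addl.
Qed.

Lemma act0 v d r : redb r -> nrm (ord v) d = 0%Z -> act v d r = r.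
Proof.
move=> Hr Hd; rewrite /act; case: ifP => R.
- have [p [k [q [Er Hp]]]] := reach_dec R; subst r.
  have /and3P [Hk _ _] := redb_split Hr.
  have [Nk Kk] := vsyl_k Hk.
  rewrite merge_dec // /upd Z.add_comm nrm_eq0_add // Nk.
  by case: ifP => // /Z.eqb_eq.
- by rewrite /upd Hd.
Qed.

Lemma merge_upd v w a b r : v != w -> merge v a (upd w b r) = upd w b (merge v a r).
Proof. by move=> H; rewrite /upd; case: ifP => //= _; rewrite eq_sym (negPf H). Qed.

Lemma merge_comm v w a b r : v != w -> merge v a (merge w b r) = merge w b (merge v a r).
Proof.
move=> H; elim: r => [|c r IH] //=.
case: (eqVneq c.1 w) => [Ew|Nw].
- rewrite merge_upd // (_ : (c.1 == v) = false) /=; last by rewrite Ew eq_sym (negPf H).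
  by rewrite Ew eqxx.
- case: (eqVneq c.1 v) => [Ev|Nv] /=.
  + by rewrite -merge_upd 1?eq_sym // Ev eqxx.
  + by rewrite (negPf Nw) (negPf Nv) IH.
Qed.

Lemma reach_act_adj v w b r : e v w ->
  reach v (map fst (act w b r)) = reach v (map fst r).
Proof. by move=> H; rewrite /act; case: ifP => _; rewrite ?reach_merge_adj ?reach_upd_adj. Qed.

Lemma act_comm v w a b r : e v w -> sim (act v a (act w b r)) (act w b (act v a r)).
Proof.
move=> H; have Hw : e w v by rewrite Hsym.
have Nvw : v != w by apply/negP => /eqP E; move: H; rewrite E Hirr.
have Ev := reach_act_adj b r H; have Ew := reach_act_adj a r Hw.
rewrite {1}/act Ev {3}/act Ew /act.
case: (reach v (map fst r)); case: (reach w (map fst r)).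
- rewrite merge_comm //; exact: sim0.
- rewrite merge_upd //; exact: sim0.
- rewrite merge_upd 1?eq_sym //; exact: sim0.
- rewrite /upd; case: ifP => _; case: ifP => _; try exact: sim0.
  exact: sim1 (@stepI [::] r (v, _) (w, _) H).
Qed.

Definition alet (l : letter V) (r : seq syl) := act l.1 (lx l.2) r.
Definition actw (w : word) (r : seq syl) := foldr alet r w.

Lemma actw_cat a b r : actw (a ++ b) r = actw a (actw b r).
Proof. exact: foldr_cat. Qed.

Lemma actw_redb w r : redb r -> redb (actw w r).
Proof. by elim: w => //= l w IH /IH; apply: act_redb. Qed.

Lemma actw_sim w r1 r2 : sim r1 r2 -> sim (actw w r1) (actw w r2).
Proof. by elim: w => //= l w IH /IH; apply: act_sim. Qed.

Lemma pow_act v j R : redb R -> sim (actw (nseq j (v, false)) R) (act v (Z.of_nat j) R).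
Proof.
move=> HR; elim: j => [|j IH] /=.
  rewrite act0 ?nrm0 //; exact: sim0.
apply: sim_trans (act_sim _ _ IH) _.
have -> : Z.pos (Pos.of_succ_nat j) = (Z.of_nat j + 1)%Z by lia.
exact: act_comp.
Qed.

Lemma actw_eq w1 w2 : eqw w1 w2 -> forall R, redb R -> sim (actw w1 R) (actw w2 R).
Proof.
elim=> [w|a b _ IH|a b c _ IH1 _ IH2|s t x y Rel] R HR.
- exact: sim0.
- exact: sim_sym (IH R HR).
- exact: sim_trans (IH1 R HR) (IH2 R HR).
- rewrite !actw_cat; apply: actw_sim.
  have HT := actw_redb t HR; move: (actw t R) HT => T HT.
  case: Rel => [v b|v Hv|v w b c Hvw] /=.
  + rewrite /alet /=; apply: sim_trans (act_comp _ _ _ HT) _.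
    have -> : (lx (~~ b) + lx b = 0)%Z by case: b.
    rewrite act0 ?nrm0 //; exact: sim0.
  + apply: sim_trans (pow_act _ _ HT) _.
    rewrite act0 ?nrm_ord //; exact: sim0.
  + exact: act_comm.
Qed.


Lemma mem_flat l r : l \in flat r -> l.1 \in map fst r.
Proof.
elim: r => [|c r IH] //; rewrite flat_cons mem_cat => /orP [/mem_pw ->|/IH H] /=.
- exact: mem_head.
- by rewrite in_cons H orbT.
Qed.

Lemma flat_upd v x q : flat (upd v x q) = pw v (nrm (ord v) x) ++ flat q.
Proof. by rewrite /upd; case: ifP => // /Z.eqb_eq ->. Qed.

Lemma flat_act v d r : eqw (flat (act v d r)) (pw v d ++ flat r).
Proof.
rewrite /act; case: ifP => R.
- have [p [k [q [Er Hp]]]] := reach_dec R; subst r.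
  rewrite merge_dec // !flat_cat flat_cons flat_upd /=.
  apply: eqw_trans (_ : eqw _ (flat p ++ (pw v d ++ pw v k) ++ flat q)) _.
    apply: eqw_app (eqw_refl _) (eqw_app _ (eqw_refl _)).
    apply: eqw_trans (eqw_sym (pw_nrm _ _)) _.
    rewrite Z.add_comm; exact: eqw_sym (pw_add _ _ _).
  have Hc : eqw (flat p ++ pw v d) (pw v d ++ flat p).
    apply: wcomm => l m /mem_flat Hl /mem_pw ->; right.
    by rewrite Hsym; move/allP: Hp; apply.
  have := eqw_app Hc (eqw_refl (pw v k ++ flat q)); by rewrite -!catA.
- rewrite flat_upd; apply: eqw_app (eqw_sym (pw_nrm _ _)) (eqw_refl _).
Qed.

Lemma flat_actw w r : eqw (flat (actw w r)) (w ++ flat r).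
Proof.
elim: w => [|l w IH] /=; first exact: eqw_refl.
apply: eqw_trans (flat_act _ _ _) _.
rewrite (_ : pw l.1 (lx l.2) = [:: l]); last by case: l => v b; exact: pw_lx.
exact: eqw_cons IH.
Qed.

Lemma nrm_pos v k x : nrm (ord v) k = k -> (0 < x <= k)%Z -> nrm (ord v) x = x.
Proof.
rewrite /nrm; case: (ord v) => [|n] // Hk Hx.
have := Z.mod_pos_bound k (Z.of_nat n.+1); rewrite Hk => H.
apply: Z.mod_small; lia.
Qed.

Lemma nrm_neg v k : nrm (ord v) k = k -> (k < 0)%Z -> ord v = 0.
Proof.
rewrite /nrm; case: (ord v) => [|n] // Hk Hx.
have := Z.mod_pos_bound k (Z.of_nat n.+1); rewrite Hk => H; lia.
Qed.

Lemma act_pw v k t : vsyl (v, k) -> ~~ reach v (map fst t) -> actw (pw v k) t = (v, k) :: t.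
Proof.
move=> /vsyl_k [Nk Kk] Rt; rewrite /pw; case: (Z.leb_spec 0 k) => Hk.
- suff H : forall j, 0 < j <= Z.to_nat k -> actw (nseq j (v, false)) t = (v, Z.of_nat j) :: t.
    rewrite H ?Z2Nat.id //; apply/andP; split; apply/leP; lia.
  elim=> [|j IH] // /andP [_ /leP Hj] /=.
  case: j IH Hj => [|j] IH Hj.
  + by rewrite /alet /act /= (negPf Rt) /upd nrm1.
  + rewrite IH; last by apply/andP; split=> //; apply/leP; lia.
    rewrite /alet /act /= eqxx /= /upd.
    have E : nrm (ord v) (Z.pos (Pos.of_succ_nat j + 1)) = Z.pos (Pos.succ (Pos.of_succ_nat j)).
      rewrite (nrm_pos (k := k)) //; lia.
    by rewrite E.
- have O := nrm_neg Nk Hk.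
  suff H : forall j, 0 < j -> actw (nseq j (v, true)) t = (v, - Z.of_nat j)%Z :: t.
    rewrite H ?Z2Nat.id ?Z.opp_involutive //; [lia|apply/ltP; lia].
  elim=> [|j IH] // _ /=.
  case: j IH => [|j] IH.
  + by rewrite /alet /act /= (negPf Rt) /upd /nrm O.
  + rewrite IH //= /alet /act /= eqxx /= /upd /nrm O.
    by rewrite /= Pos.add_1_r.
Qed.

Lemma flat_red r t : redb (r ++ t) -> actw (flat r) t = r ++ t.
Proof.
elim: r => [|c r IH] //= /and3P [Hc Hr Hrt].
rewrite flat_cons actw_cat IH //; case: c Hc Hr => v k /= Hc Hr.
exact: act_pw.
Qed.

Lemma verts_upd x v y q : x \in map fst (upd v y q) -> (x == v) || (x \in map fst q).
Proof.
rewrite /upd; case: (nrm (ord v) y =? 0)%Z => [->|]; first by rewrite orbT.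
by rewrite /= in_cons.
Qed.

Lemma verts_merge x v d r : x \in map fst (merge v d r) -> x \in map fst r.
Proof.
elim: r => [|c r IH] //=; case: eqP => [Ec|_].
- move/verts_upd; rewrite in_cons Ec => /orP [->|->] //; by rewrite orbT.
- by rewrite /= !in_cons => /orP [->|/IH ->]; rewrite ?orbT.
Qed.

Lemma verts_act x v d r : x \in map fst (act v d r) -> (x == v) || (x \in map fst r).
Proof.
rewrite /act; case: (reach v (map fst r)); last exact: verts_upd.
by move/verts_merge ->; rewrite orbT.
Qed.

Lemma verts_actw x w r : x \in map fst (actw w r) -> (x \in map fst w) || (x \in map fst r).
Proof.
elim: w => [|l w IH] //= H; case/orP: (verts_act H) => [/eqP ->|/IH]; first by rewrite mem_head.
by case/orP => [H1|->]; rewrite ?orbT // in_cons H1 orbT.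
Qed.

Lemma sim_mem r1 r2 : sim r1 r2 -> map fst r1 =i map fst r2.
Proof.
elim=> // a b c H _ IH x; rewrite -IH; case: H => p q a' b' _.
rewrite !map_cat !mem_cat !in_cons.
by case: (x \in map fst p); case: (x == a'.1); case: (x == b'.1).
Qed.

Lemma sim_filter (P : pred V) r1 r2 : (forall x y, P x -> P y -> ~~ e x y) -> sim r1 r2 ->
  filter (fun c => P c.1) r1 = filter (fun c => P c.1) r2.
Proof.
move=> HP; elim=> // a b c H _ <-; case: H => p q a' b' Hab.
rewrite !filter_cat /=; case Pa: (P a'.1); case Pb: (P b'.1) => //.
by move: (HP _ _ Pa Pb); rewrite Hab.
Qed.

Lemma flat_step r1 r2 : step r1 r2 -> eqw (flat r1) (flat r2).
Proof.
case=> p q a b H; rewrite !flat_cat !flat_cons.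
apply: eqw_app (eqw_refl _) _; rewrite !catA; apply: eqw_app _ (eqw_refl _).
apply: wcomm => l m /mem_pw -> /mem_pw ->; by right.
Qed.

Lemma flat_sim r1 r2 : sim r1 r2 -> eqw (flat r1) (flat r2).
Proof. elim=> [r|a b c H _ IH]; [exact: eqw_refl|exact: eqw_trans (flat_step H) IH]. Qed.

(* deletion of vertices *)
Lemma rho_eq (P : pred V) w1 w2 : eqw w1 w2 ->
  eqw (filter (fun l => P l.1) w1) (filter (fun l => P l.1) w2).
Proof.
elim=> [w|a b _ IH|a b c _ IH1 _ IH2|s t x y Rel].
- exact: eqw_refl.
- exact: eqw_sym.
- exact: eqw_trans IH2.
- rewrite !filter_cat; apply: eqw_ctx.
  case: Rel => [v b|v Hv|v w b c Hvw] /=.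
  + by case: (P v) => /=; [exact: eqw_rel (gp_rel_inv e ord v b)|exact: eqw_refl].
  + rewrite filter_nseq /=; case: (P v); rewrite ?mul1n ?mul0n /=;
      [exact: eqw_rel (gp_rel_ord e Hv)|exact: eqw_refl].
  + case: (P v); case: (P w) => /=; try exact: eqw_refl.
    exact: eqw_rel (gp_rel_comm ord b c Hvw).
Qed.

Lemma ex_red w : exists w', eqw w w' /\ reduced e ord w'.
Proof.
move: {2}(size w) (leqnn (size w)) => n; elim: n w => [|n IH] w Hw.
- exists w; split; first exact: eqw_refl.
  by move=> w' _; rewrite (_ : size w = 0) //; apply/eqP; rewrite -leqn0.
- case: (classic (reduced e ord w)) => Hr; first by exists w; split=> //; exact: eqw_refl.
  have : exists w', eqw w w' /\ size w' < size w.
    apply: NNPP => Hn; apply: Hr => w' E; rewrite leqNgt; apply/negP => Hlt; apply: Hn; by exists w'.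
  case=> w' [E Hs].
  have Hw' : size w' <= n by have := leq_trans Hs Hw.
  have [w'' [E' R']] := IH w' Hw'.
  exists w''; split=> //; exact: eqw_trans E'.
Qed.


Definition NF (w : word) := actw w [::].

Lemma NF_redb w : redb (NF w). Proof. exact: actw_redb. Qed.
Lemma NF_flat w : eqw (flat (NF w)) w.
Proof. by have := flat_actw w [::]; rewrite cats0. Qed.
Lemma NF_eq w1 w2 : eqw w1 w2 -> sim (NF w1) (NF w2).
Proof. by move=> H; apply: actw_eq. Qed.
Lemma NF_verts x w : x \in map fst (NF w) -> x \in map fst w.
Proof. by move/verts_actw; rewrite orbF. Qed.

Lemma supp_iff u x : in_supp e ord u x <-> x \in map fst (NF u).
Proof.
split.
- case=> w [E R M]; apply/negPn/negP => Nx.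
  pose P := fun y : V => y \in map fst (NF u).
  have E1 : eqw w (filter (fun l => P l.1) w).
    have H1 := rho_eq P (eqw_trans (eqw_sym E) (eqw_sym (NF_flat u))).
    rewrite (_ : filter _ (flat (NF u)) = flat (NF u)) in H1; last first.
      by apply/all_filterP/allP => l /mem_flat.
    exact: eqw_trans (eqw_trans (eqw_sym E) (eqw_sym (NF_flat u))) (eqw_sym H1).
  have := R _ E1; rewrite size_filter.
  have : has (predC (fun l => P l.1)) w.
    case/mapP: M => l Hl El; apply/hasP; exists l => //=; by rewrite /P -El.
  rewrite has_count -(count_predC (fun l => P l.1) w) => H.
  by rewrite leqNgt -{1}(addn0 (count _ w)) ltn_add2l H.
- move=> Hx; have [w [E R]] := ex_red u; exists w; split=> //.
  apply: NF_verts; by rewrite -(sim_mem (NF_eq E)).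
Qed.

Lemma W_verts u (P : V -> Prop) : in_W e ord P u -> forall x, x \in map fst (NF u) -> P x.
Proof.
case=> w [E H] x; rewrite (sim_mem (NF_eq E)) => /NF_verts /mapP [l Hl ->]; exact: H.
Qed.

Lemma filter_head (P : pred V) (L : seq syl) x : P x -> x \in map fst L ->
  exists d Y, filter (fun c => P c.1) L = d :: Y /\ d.1 \in map fst L.
Proof.
move=> Px; elim: L => [|c L IH] //=; rewrite in_cons.
case Pc: (P c.1); first by move=> _; exists c, (filter (fun c => P c.1) L); rewrite mem_head.
case/orP => [/eqP E|/IH [d [Y [-> Hd]]]]; first by move: Pc; rewrite -E Px.
by exists d, Y; rewrite in_cons Hd orbT.
Qed.

Section Main.
Variable u : word.
Local Notation S := (map fst (NF u)).
Local Notation U := (flat (NF u)).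
Hypothesis Scomp : forall x y, x \in S -> y \in S -> x <> y -> e x y.

Definition stv x := (x \in S) || all (e x) S.

Lemma stv_comm x : stv x -> forall y, y \in S -> x = y \/ e x y.
Proof.
rewrite /stv => /orP [Hx|/allP H] y Hy; last by right; apply: H.
case: (eqVneq x y) => [->|N]; first by left.
by right; apply: Scomp => //; apply/eqP.
Qed.

Lemma comm_U (w : word) : (forall l, l \in w -> stv l.1) -> eqw (w ++ U) (U ++ w).
Proof. move=> H; apply: wcomm => l m /H Hl /mem_flat Hm; exact: stv_comm. Qed.

Lemma comm_pw v k : stv v -> eqw (pw v k ++ U) (U ++ pw v k).
Proof. by move=> H; apply: comm_U => l /mem_pw ->. Qed.

Lemma main_ind n r : size r <= n -> redb r -> eqw (flat r ++ U) (U ++ flat r) ->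
  all stv (map fst r).
Proof.
elim: n r => [|n IH] r Hs Hr Hc.
  by case: r Hs {Hr Hc}.
case: (classic (exists p c q, r = p ++ c :: q /\ all (e c.1) (map fst p) /\ stv c.1)).
  case=> p [c [q [Er [Hp Hst]]]]; subst r.
  have Hsim := sim_front q Hp.
  have Hr' := sim_redb Hsim Hr.
  have Hpq : redb (p ++ q) by case/and3P: Hr'.
  have Hf := flat_sim Hsim; rewrite flat_cons in Hf.
  have Hc' : eqw (flat (p ++ q) ++ U) (U ++ flat (p ++ q)).
    apply: (@cancel_l (pw c.1 c.2)); rewrite catA.
    apply: eqw_trans (eqw_app (eqw_sym Hf) (eqw_refl _)) _.
    apply: eqw_trans Hc _.
    apply: eqw_trans (eqw_app (eqw_refl _) Hf) _.
    rewrite !catA; apply: eqw_app _ (eqw_refl _).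
    exact: eqw_sym (comm_pw _ Hst).
  have := IH (p ++ q); rewrite size_cat => /(_ _ Hpq Hc').
  rewrite !map_cat !all_cat /= Hst => -> //.
  by move: Hs; rewrite size_cat /= addnS.
move=> NF1.
case: (classic (exists p c q, r = p ++ c :: q /\ all (e c.1) (map fst q) /\ stv c.1)).
  case=> p [c [q [Er [Hq Hst]]]]; subst r.
  have Hsim := sim_back p Hq.
  have Hr' := sim_redb Hsim Hr.
  have Hpq : redb (p ++ q).
    by move: Hr'; rewrite catA => /redb_prefix.
  have Hf : eqw (flat (p ++ c :: q)) (flat (p ++ q) ++ pw c.1 c.2).
    have := flat_sim Hsim; by rewrite (catA p q [:: c]) flat_rcons.
  have Hc' : eqw (flat (p ++ q) ++ U) (U ++ flat (p ++ q)).
    apply: (@cancel_r (pw c.1 c.2)).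
    apply: eqw_trans (_ : eqw _ (flat (p ++ q) ++ pw c.1 c.2 ++ U)) _.
      rewrite -catA; apply: eqw_app (eqw_refl _) (eqw_sym (comm_pw _ Hst)).
    rewrite catA; apply: eqw_trans (eqw_app (eqw_sym Hf) (eqw_refl _)) _.
    apply: eqw_trans Hc _.
    rewrite -catA; exact: eqw_app (eqw_refl _) Hf.
  have := IH (p ++ q); rewrite size_cat => /(_ _ Hpq Hc').
  rewrite !map_cat !all_cat /= Hst => -> //.
  by move: Hs; rewrite size_cat /= addnS.
move=> NB.
case: r Hs Hr Hc NF1 NB => [|c r'] // Hs Hr Hc NF1 NB.
exfalso.
have Hnst : ~~ stv c.1 by apply/negP => H; apply: NF1; exists [::], c, r'.
move: Hnst; rewrite /stv negb_or => /andP [NcS /allPn [s Hs0 Nes]].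
have Ru : redb (NF u) := NF_redb u.
have R1 : redb (NF u ++ c :: r').
  apply: redb_catP => // p1 c0 p2 E.
  have Hc0 : c0.1 \in S by rewrite E map_cat mem_cat /= in_cons eqxx orbT.
  have := Ru; rewrite E => /redb_split /and3P [V0 Rr0 _].
  rewrite V0 map_cat reach_cat negb_or Rr0 andTb.
  apply/negP => /andP [_ Hre]; have [p [k [q [Eq Hp]]]] := reach_dec Hre; apply: NF1.
  by exists p, (c0.1, k), q; split=> //; split=> //; rewrite /stv Hc0.
have R2 : redb ((c :: r') ++ NF u).
  apply: redb_catP => // p1 c0 p2 E.
  have := Hr; rewrite E => /redb_split /and3P [V0 Rr0 _].
  rewrite V0 map_cat reach_cat negb_or Rr0 andTb.
  apply/negP => /andP [Hall /reach_mem Hm]; apply: NB.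
  by exists p1, c0, p2; split=> //; split=> //; rewrite /stv Hm.
have Eu : actw U [::] = NF u by have := @flat_red (NF u) [::]; rewrite cats0; apply.
have Er : actw (flat (c :: r')) [::] = c :: r'.
  by have := @flat_red (c :: r') [::]; rewrite cats0; apply.
have A1 : NF (U ++ flat (c :: r')) = NF u ++ c :: r' by rewrite /NF actw_cat Er flat_red.
have A2 : NF (flat (c :: r') ++ U) = (c :: r') ++ NF u by rewrite /NF actw_cat Eu flat_red.
have Hs' := NF_eq Hc; rewrite A1 A2 in Hs'.
pose P := fun x => (x == s) || (x == c.1).
have HP : forall x y, P x -> P y -> ~~ e x y.
  move=> x y /orP [] /eqP -> /orP [] /eqP ->; rewrite ?Hirr //; by rewrite Hsym.
have Ef := sim_filter HP Hs'.
have Ps : P s by rewrite /P eqxx.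
have [d [Y [Ed Hd]]] := filter_head Ps Hs0.
rewrite !filter_cat Ed /= {1}/P eqxx orbT in Ef.
case: Ef => Ecd _; move: NcS; by rewrite Ecd Hd.
Qed.

End Main.

Lemma final u (Hu : CP_elt e ord u) g :
  eqw (g ++ u) (u ++ g) <-> in_W e ord (in_st e ord u) g.
Proof.
have [P [HP HW]] := Hu.
have Scomp : forall x y, x \in map fst (NF u) -> y \in map fst (NF u) -> x <> y -> e x y.
  by move=> x y Hx Hy N; apply: HP => //; apply: (W_verts HW).
have st_iff : forall v, in_st e ord u v <-> stv u v.
  move=> v; rewrite /in_st /stv; split.
  - case=> [/supp_iff ->|H] //; apply/orP; right; apply/allP => x Hx.
    by apply: H; apply/supp_iff.
  - case/orP => [/supp_iff H|/allP H]; [by left|right => x /supp_iff; exact: H].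
have UU : eqw u (flat (NF u)) := eqw_sym (NF_flat u).
split.
- move=> Hc; exists (flat (NF g)); split; first exact: eqw_sym (NF_flat g).
  move=> x /mem_flat Hx; apply/st_iff.
  have Hc' : eqw (flat (NF g) ++ flat (NF u)) (flat (NF u) ++ flat (NF g)).
    apply: eqw_trans (eqw_app (NF_flat g) (eqw_sym UU)) _.
    apply: eqw_trans Hc _.
    exact: eqw_app UU (eqw_sym (NF_flat g)).
  have := main_ind Scomp (leqnn _) (NF_redb g) Hc'.
  by move/allP; apply.
- case=> w [E H].
  have Hw : eqw (w ++ flat (NF u)) (flat (NF u) ++ w).
    by apply: comm_U => // l Hl; apply/st_iff; apply: H.
  apply: eqw_trans (eqw_app E UU) _.
  apply: eqw_trans Hw _.
  exact: eqw_app (eqw_sym UU) (eqw_sym E).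
Qed.

End GP.

Theorem lemma2p2 (V : finType) (e : rel V) (ord : V -> nat)
  (HV : 0 < #|V|) (Hsym : symmetric e) (Hirr : irreflexive e)
  (Hord : forall v, dir_indec_order (ord v))
  (u : seq (letter V)) (Hu : CP_elt e ord u) :
  forall g : seq (letter V),
    gp_eq e ord (g ++ u) (u ++ g) <-> in_W e ord (in_st e ord u) g.
Proof.
have Hord1 : forall v, ord v <> 1.
  move=> v; case: (Hord v) => [->|[p [k [Hp Hk ->]]]] //.
  case: k Hk => // k _; rewrite expnS => /eqP; rewrite muln_eq1 => /andP [/eqP E _].
  by move: Hp; rewrite E.
move=> g; exact: (final Hsym Hirr Hord1 Hu).
Qed.
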